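(* For any $F\in\mathscr{F}_1$, $i\in[F]$ and $s\in\mathcal{S}$, letting $f_i(s)=\gamma(s_1)\gamma(s_2)\cdots\gamma(s_\rho)$ be the $\gamma$-decomposition of $f_i(s)$: (i) $\mathcal{S}_{F,i}(\lambda)\ne\emptyset$ if and only if $f_i(s_1)=\gamma(s_1)=\lambda$; (ii) for any $r=1,\dots,\rho$, if $r\ge2$ or $|\mathcal{P}^2_{F,i}|=2$, then $|\gamma(s_r)|\ge2$; (iii) for any $r=2,\dots,\rho$, writing $\gamma(s_r)=g_1g_2\cdots g_l$, we have $g_1g_2\in\bar{\mathcal{P}}^2_{F,i}(f_i(s_{r-1}))$.
   Context: $\mathcal{S}$ is a finite source alphabet with $|\mathcal{S}|\ge 2$ and $\mathcal{C}=\{0,1\}$; $\mathcal{A}^k,\mathcal{A}^{\ast},\mathcal{A}^{+}$ are sequences of length $k$, finite, positive finite length; $\lambda$ empty sequence; $\preceq$ prefix, $\prec$ proper prefix; $\mathrm{suff}(x_1\cdots x_n)=x_2\cdots x_n$. A code-tuple $F$ with $m\ge1$ code tables consists of maps $f_i:\mathcal{S}\to\mathcal{C}^{\ast}$ and $\tau_i:\mathcal{S}\to\{0,\dots,m-1\}$, $i\in[F]=\{0,\dots,m-1\}$. $f_i^{\ast}(\lambda)=\lambda$, $f_i^{\ast}(\pmb{x})=f_i(x_1)f^{\ast}_{\tau_i(x_1)}(\mathrm{suff}(\pmb{x}))$. $\mathcal{S}_{F,i}(\pmb{b})=\{s:f_i(s)=\pmb{b}\}$. For integer $k\ge0$, $\pmb{b}\in\mathcal{C}^{\ast}$: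 $\mathcal{P}^k_{F,i}(\pmb{b})$ is the set of $\pmb{c}\in\mathcal{C}^k$ such that some $\pmb{x}=x_1\cdots x_n\in\mathcal{S}^{+}$ has $f_i^{\ast}(\pmb{x})\succeq\pmb{b}\pmb{c}$ and $f_i(x_1)\succeq\pmb{b}$; $\bar{\mathcal{P}}^k_{F,i}(\pmb{b})$ the same with $f_i(x_1)\succ\pmb{b}$; $\mathcal{P}^k_{F,i}=\mathcal{P}^k_{F,i}(\lambda)$. $F\in\mathscr{F}_{2\text{-}\mathrm{dec}}$ if $\mathcal{P}^2_{F,\tau_i(s)}\cap\bar{\mathcal{P}}^2_{F,i}(f_i(s))=\emptyset$ for all $i,s$, and $\mathcal{P}^2_{F,\tau_i(s)}\cap\mathcal{P}^2_{F,\tau_i(s')}=\emptyset$ whenever $s\ne s'$, $f_i(s)=f_i(s')$. Fix $\mu:\mathcal{S}\to(0,1]$ with $\sum_s\mu(s)=1$; $Q_{i,j}(F)=\sum_{s:\tau_i(s)=j}\mu(s)$; $F\in\mathscr{F}_{\mathrm{reg}}$ if $\pmb{\pi}Q(F)=\pmb{\pi}$, $\sum_i\pi_i=1$ has a unique solution. $\mathscr{F}_1=\{F\in\mathscr{F}_{\mathrm{reg}}\cap\mathscr{F}_{2\text{-}\mathrm{dec}}:\mathcal{P}^1_{F,i}=\{0,1\}\ \forall i\in[F]\}$. $\gamma$-decomposition: for $F\in\mathscr{F}_1$, $i\in[F]$, $s\in\mathcal{S}$, the symbols $s'$ with $f_i(s')\prec f_i(s)$ have pairwise distinct codewords; list them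 together with $s$ as $s_1,\dots,s_\rho$ with $s_\rho=s$ and $f_i(s_1)\prec f_i(s_2)\prec\cdots\prec f_i(s_\rho)$, and define $\gamma(s_1)=f_i(s_1)$ and $\gamma(s_r)\in\mathcal{C}^{\ast}$ by $f_i(s_r)=f_i(s_{r-1})\gamma(s_r)$ for $r\ge2$, so that $f_i(s)=\gamma(s_1)\cdots\gamma(s_\rho)$. *)

(* Defs.v *)
From HB Require Import structures.
From mathcomp Require Import all_boot all_order all_algebra.
From mathcomp Require Import boolp reals.

Set Implicit Arguments.
Unset Strict Implicit.
Unset Printing Implicit Defensive.
Import Order.TTheory GRing.Theory Num.Theory.

(* Code alphabet C = bool (false = 0, true = 1); sequences are seq bool. *)

Section CodeTuple.
Variables (S : finType) (m : nat).
Variables (f : 'I_m -> S -> seq bool) (tau : 'I_m -> S -> 'I_m).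

Definition pprefix (b c : seq bool) : bool := prefix b c && (size b < size c).

Fixpoint fstar (i : 'I_m) (x : seq S) : seq bool :=
  match x with
  | [::] => [::]
  | a :: x' => f i a ++ fstar (tau i a) x'
  end.

Definition Sset (i : 'I_m) (b : seq bool) : {set S} := [set s | f i s == b].

Definition Pk (k : nat) (i : 'I_m) (b c : seq bool) : Prop :=
  size c = k /\ exists (x1 : S) (xs : seq S),
    prefix (b ++ c) (fstar i (x1 :: xs)) /\ prefix b (f i x1).

Definition Pbark (k : nat) (i : 'I_m) (b c : seq bool) : Prop :=
  size c = k /\ exists (x1 : S) (xs : seq S),
    prefix (b ++ c) (fstar i (x1 :: xs)) /\ pprefix b (f i x1).

Definition Pset (k : nat) (i : 'I_m) (b : seq bool) : {set k.-tuple bool} :=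
  [set c : k.-tuple bool | `[< Pk k i b c >]].

Definition two_dec : Prop :=
  (forall (i : 'I_m) (s : S) (c : seq bool),
      ~ (Pk 2 (tau i s) [::] c /\ Pbark 2 i (f i s) c)) /\
  (forall (i : 'I_m) (s s' : S), s != s' -> f i s = f i s' ->
      forall c : seq bool, ~ (Pk 2 (tau i s) [::] c /\ Pk 2 (tau i s') [::] c)).

Section Reg.
Variables (R : realType) (mu : S -> R).
Local Open Scope ring_scope.

Definition Qmat : 'M[R]_m :=
  \matrix_(i < m, j < m) \sum_(s : S | tau i s == j) mu s.

Definition regular : Prop :=
  exists! pi : 'rV[R]_m, pi *m Qmat = pi /\ \sum_(j < m) pi 0 j = 1%R.

Definition F1 : Prop :=
  regular /\ two_dec /\ forall i : 'I_m, Pset 1 i [::] = setT.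
End Reg.

Definition gamma_decomp (i : 'I_m) (s : S) (ss : seq S) : Prop :=
  uniq ss /\
  (forall s' : S, s' \in ss <-> (pprefix (f i s') (f i s) \/ s' = s)) /\
  sorted (fun a b => pprefix (f i a) (f i b)) ss /\
  last s ss = s.

(* gamma(s_{r+1}) (0-indexed r) for the decomposition ss of f_i(s) *)
Definition gamma (i : 'I_m) (s : S) (ss : seq S) (r : nat) : seq bool :=
  match r with
  | 0 => f i (nth s ss 0)
  | r'.+1 => drop (size (f i (nth s ss r'))) (f i (nth s ss r))
  end.

End CodeTuple.

(* Main.v *)
Require Import Defs.
From HB Require Import structures.
From mathcomp Require Import all_boot all_order all_algebra.
From mathcomp Require Import boolp reals.
Import Order.TTheory GRing.Theory Num.Theory.

Section H.
Set Implicit Arguments.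
Variables (S : finType) (m : nat).
Variables (f : 'I_m -> S -> seq bool) (tau : 'I_m -> S -> 'I_m).
Hypothesis hP1 : forall i : 'I_m, Pset f tau 1 i [::] = setT.

Lemma ext1 j c : exists x1 xs, prefix [:: c] (fstar f tau j (x1 :: xs)).
Proof.
have : [tuple c] \in Pset f tau 1 j [::] by rewrite hP1 inE.
rewrite inE => /asboolP [_ [x1 [xs [H _]]]].
by exists x1, xs.
Qed.

Lemma extL j (x : seq S) d : exists y,
  prefix (fstar f tau j x ++ [:: d]) (fstar f tau j (x ++ y)).
Proof.
elim: x j => [|a x IH] j /=.
  by have [x1 [xs H]] := ext1 j d; exists (x1 :: xs).
have [y Hy] := IH (tau j a); exists y.
by rewrite -catA prefix_catr //= eqxx.
Qed.

Lemma extL1 j x1 d : exists xs,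
  prefix (f j x1 ++ [:: d]) (fstar f tau j (x1 :: xs)).
Proof.
have [y Hy] := extL j [:: x1] d; exists y.
by move: Hy; rewrite /= cats0.
Qed.

Lemma ext2 j c : exists d x1 xs, prefix [:: c; d] (fstar f tau j (x1 :: xs)).
Proof.
have [x1 [xs H]] := ext1 j c.
move: H; case E: (fstar f tau j (x1 :: xs)) => [|c' w] //=.
move=> /andP[/eqP Ec _]; subst c'.
have [y Hy] := extL j (x1 :: xs) true.
rewrite E /= in Hy.
exists (head true w), x1, (xs ++ y).
apply: prefix_trans Hy; rewrite /= eqxx /=.
by case: w {E} => //= a w; rewrite eqxx prefix0s.
Qed.

End H.

Lemma card3 (T : finType) (A : {set T}) a b c :
  a != b -> a != c -> b != c -> a \in A -> b \in A -> c \in A -> 2 < #|A|.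
Proof.
move=> ab ac bc aA bA cA.
have sub : [set a; b; c] \subset A.
  by apply/subsetP => x; rewrite !inE => /orP[/orP[]|] /eqP->.
apply: leq_trans (subset_leq_card sub).
have -> : [set a; b; c] = a |: [set b; c] by rewrite setUA.
by rewrite cardsU1 cards2 !inE negb_or ab ac bc.
Qed.

Lemma pprefix_trans (S : finType) (m : nat) (f : 'I_m -> S -> seq bool) i :
  transitive (fun a b => pprefix (f i a) (f i b)).
Proof.
move=> y x z /andP[p1 s1] /andP[p2 s2]; apply/andP; split.
  exact: prefix_trans p1 p2.
exact: ltn_trans s1 s2.
Qed.

Theorem lemma16 (S : finType) (hS : (1 < #|S|)%N) (m : nat) (hm : (0 < m)%N)
  (f : 'I_m -> S -> seq bool) (tau : 'I_m -> S -> 'I_m)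
  (R : realType) (mu : S -> R)
  (hmu : forall s : S, (0 < mu s)%R /\ (mu s <= 1)%R)
  (hmu1 : (\sum_(s : S) mu s)%R = 1%R)
  (hF : F1 f tau mu)
  (i : 'I_m) (s : S) (ss : seq S)
  (hss : gamma_decomp f i s ss) :
  (* (i) *)
  (Sset f i [::] != set0 <-> f i (nth s ss 0) = [::]) /\
  (* (ii) r = r0.+1 ranges over 1..rho *)
  (forall r0 : nat, (r0 < size ss)%N ->
     ((0 < r0)%N \/ #|Pset f tau 2 i [::]| = 2%N) ->
     (2 <= size (gamma f i s ss r0))%N) /\
  (* (iii) r = r0.+1 ranges over 2..rho *)
  (forall r0 : nat, (0 < r0)%N -> (r0 < size ss)%N ->
     exists (g1 g2 : bool) (rest : seq bool),
       gamma f i s ss r0 = [:: g1, g2 & rest] /\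
       Pbark f tau 2 i (f i (nth s ss r0.-1)) [:: g1; g2]).
Proof.
case: hF => _ [[C1 C2] hP1].
case: hss => Huniq [Hmem [Hsort Hlast]].
have sIn : s \in ss by apply/Hmem; right.
have consec : forall r, r.+1 < size ss ->
    pprefix (f i (nth s ss r)) (f i (nth s ss r.+1)).
  by move=> r hr; move/(sortedP s): Hsort => /(_ r hr).
have PkS : forall x1 c, f i x1 = [::] -> Pk f tau 2 (tau i x1) [::] c ->
    Pk f tau 2 i [::] c.
  move=> x1 c fx [sc [y1 [ys [H _]]]]; split=> //.
  by exists x1, (y1 :: ys); rewrite /= fx; split=> //; exact: prefix0s.
have inP : forall a1 a2, Pk f tau 2 i [::] [:: a1; a2] ->
    [tuple a1; a2] \in Pset f tau 2 i [::].
  by move=> a1 a2 H; rewrite inE; apply/asboolP.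
have c3 : forall a1 a2 b1 b2 c1 c2,
    Pk f tau 2 i [::] [:: a1; a2] -> Pk f tau 2 i [::] [:: b1; b2] ->
    Pk f tau 2 i [::] [:: c1; c2] ->
    [:: a1; a2] != [:: b1; b2] -> [:: a1; a2] != [:: c1; c2] ->
    [:: b1; b2] != [:: c1; c2] -> #|Pset f tau 2 i [::]| <> 2.
  move=> a1 a2 b1 b2 c1 c2 Ha Hb Hc ab ac bc E.
  have tne : forall x y : 2.-tuple bool, val x != val y -> x != y.
    by move=> x y; apply: contra_neq => ->.
  have := @card3 _ _ [tuple a1; a2] [tuple b1; b2] [tuple c1; c2]
    (tne _ _ ab) (tne _ _ ac) (tne _ _ bc) (inP _ _ Ha) (inP _ _ Hb) (inP _ _ Hc).
  by rewrite E.
have part2 : forall r0 : nat, (r0 < size ss)%N ->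
     ((0 < r0)%N \/ #|Pset f tau 2 i [::]| = 2%N) ->
     (2 <= size (gamma f i s ss r0))%N.
  case=> [|r] hr hor /=.
    case: hor => // hc.
    set s1 := nth s ss 0.
    case E: (f i s1) => [|c [|c' w]] //; exfalso.
    + have [d0 [x0 [xs0 H0]]] := ext2 hP1 (tau i s1) false.
      have [d1 [x1 [xs1 H1]]] := ext2 hP1 (tau i s1) true.
      have P0 : Pk f tau 2 (tau i s1) [::] [:: false; d0].
        by split=> //; exists x0, xs0; split=> //; exact: prefix0s.
      have P1 : Pk f tau 2 (tau i s1) [::] [:: true; d1].
        by split=> //; exists x1, xs1; split=> //; exact: prefix0s.
      have [t tn] : exists t, t != s1.
        move/card_gt1P: hS => [x [y [_ _ xy]]].
        case: (eqVneq x s1) => [xs|]; last by exists x.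
        by exists y; rewrite -xs eq_sym.
      have [c1 [c2 [Pc nPc]]] : exists c1 c2, Pk f tau 2 i [::] [:: c1; c2] /\
          ~ Pk f tau 2 (tau i s1) [::] [:: c1; c2].
        case Et: (f i t) => [|c w].
          have [e [y1 [ys He]]] := ext2 hP1 (tau i t) false.
          have Pe : Pk f tau 2 (tau i t) [::] [:: false; e].
            by split=> //; exists y1, ys; split=> //; exact: prefix0s.
          exists false, e; split; first exact: PkS Et Pe.
          move=> Ps; apply: (C2 i s1 t); first by rewrite eq_sym.
            by rewrite E Et.
          by split; [exact: Ps | exact: Pe].
        have [xs Hx] := extL1 hP1 i t true.
        have Hpre : prefix [:: c; head true w] (fstar f tau i (t :: xs)).
          apply: prefix_trans Hx; rewrite Et /= eqxx /=.
          by case: w {Et} => //= a w; rewrite eqxx prefix0s.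
        exists c, (head true w); split.
          by split=> //; exists t, xs; split=> //; exact: prefix0s.
        move=> Ps; apply: (C1 i s1 [:: c; head true w]); split=> //.
        split=> //; exists t, xs; rewrite E; split=> //.
        by rewrite /pprefix prefix0s Et.
      apply: (c3 false d0 true d1 c1 c2 (PkS _ _ E P0) (PkS _ _ E P1) Pc _ _ _ hc) => //.
        by apply/eqP => -[e1 e2]; apply: nPc; rewrite -e1 -e2.
      by apply/eqP => -[e1 e2]; apply: nPc; rewrite -e1 -e2.
    + have Pcd : forall d, Pk f tau 2 i [::] [:: c; d].
        move=> d; have [xs Hx] := extL1 hP1 i s1 d.
        split=> //; exists s1, xs; split; last exact: prefix0s.
        by move: Hx; rewrite E.
      have [d [x1 [xs Hd]]] := ext2 hP1 i (~~ c).
      have Pn : Pk f tau 2 i [::] [:: ~~ c; d].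
        by split=> //; exists x1, xs; split=> //; exact: prefix0s.
      apply: (c3 c false c true (~~ c) d (Pcd _) (Pcd _) Pn _ _ _ hc).
      * by rewrite !eqseq_cons eqxx.
      * by case: (c).
      * by case: (c).

  have /andP[pre sz] := consec r hr.
  move: pre sz => /prefixP [g Eg]; rewrite Eg size_cat drop_size_cat //.
  case: g Eg => [|c [|c' w]] Eg //; first by rewrite addn0 ltnn.
  move=> _; exfalso.
  have [d [x1 [xs Hd]]] := ext2 hP1 (tau i (nth s ss r)) c.
  have [xs' Hx] := extL1 hP1 i (nth s ss r.+1) d.
  apply: (C1 i (nth s ss r) [:: c; d]); split.
    by split=> //; exists x1, xs; split=> //; exact: prefix0s.
  split=> //; exists (nth s ss r.+1), xs'; split; last exact: consec.
  by move: Hx; rewrite Eg -catA.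
split; last split.
- split.
  + move=> /set0Pn [t]; rewrite inE => /eqP ft.
    have [u [uin fu]] : exists u, u \in ss /\ f i u = [::].
      case Es: (f i s) => [|x w]; first by exists s.
      by exists t; split=> //; apply/Hmem; left; rewrite /pprefix ft Es prefix0s.
    have := nth_index s uin; have := index_mem u ss; rewrite uin.
    case: (index u ss) => [|k] hk Ek; first by rewrite Ek.
    have := sorted_ltn_nth (@pprefix_trans S m f i) s Hsort.
    move=> /(_ 0 k.+1); rewrite !inE Ek fu => /(_ (leq_ltn_trans (leq0n _) hk) hk isT).
    by rewrite /pprefix ltn0 andbF.
  + by move=> H; apply/set0Pn; exists (nth s ss 0); rewrite inE H.
- exact: part2.
- case=> [|r] // _ hr.
  have := part2 r.+1 hr (or_introl isT).
  have /andP[pre sz] := consec r hr.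
  move: pre sz => /prefixP [g Eg] sz /=; rewrite Eg drop_size_cat //.
  case: g Eg sz => [|g1 [|g2 rest]] Eg sz // _.
  exists g1, g2, rest; split=> //.
  split=> //; exists (nth s ss r.+1), [::]; split; last exact: consec.
  by rewrite /= cats0 Eg prefix_catr //= !eqxx prefix0s.
Qed.
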